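(* At the terminal level $\mathfrak{m}$, the unique closed communicating class $\mathscr{P}^{\star,\mathfrak{m}}_1$ of $\mathfrak{X}^{\star,\mathfrak{m}}$ consists exactly of the ground states: $$\bigcup_{\mathcal{P}\in\mathscr{P}^{\star,\mathfrak{m}}_1}\mathcal{P}=\mathcal{S}.$$
   Context: Setting. Let $\Omega$ be a finite set with a connected undirected graph structure; write $\eta\sim\xi$ if $\{\eta,\xi\}$ is an edge. Let $\mathbb{H}:\Omega\to\mathbb{R}$. Paths and heights. A path $\omega:\eta\to\xi$ is a sequence $(\omega_n)_{n=0}^N$ with $\omega_0=\eta$, $\omega_N=\xi$ and $\omega_n\sim\omega_{n+1}$ ($N=0$ allowed). Its height is $\Phi_\omega:=\max_n\mathbb{H}(\omega_n)$. Set $\Phi(\eta,\xi):=\min_{\omega:\eta\to\xi}\Phi_\omega$. For nonempty sets, $\Phi(\mathcal{A},\mathcal{B}):=\min_{\eta\in\mathcal{A},\xi\in\mathcal{B}}\Phi(\eta,\xi)$, and $\Phi(\mathcal{A},\eta):=\Phi(\mathcal{A},\{\eta\})$. Ground states. $\mathcal{S}:=\operatorname{argmin}_\Omega\mathbb{H}$, $\overline{\Phi}:=\max_{s,s'\in\mathcal{S}}\Phi(s,s')$, and $\overline{\Omega}:=\{\eta:\Phi(\mathcal{S},\eta)\le\overline{\Phi}\}$. Sets. For $\mathcal{A}\subseteq\Omega$: $\mathcal{F}(\mathcal{A}):=\operatorname{argmin}_{\mathcal{A}}\mathbb{H}$; $\partial\mathcal{A}:=\{\eta\notin\mathcal{A}:\eta\sim\xi\text{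 for some }\xi\in\mathcal{A}\}$; $\partial^\star\mathcal{A}:=\mathcal{F}(\partial\mathcal{A})$. A set is connected if any two of its points are joined by a path inside it. Stable plateaux and cycles. A stable plateau is a nonempty connected set $\mathcal{P}$ with constant energy $\mathbb{H}(\mathcal{P})$ such that $\mathbb{H}>\mathbb{H}(\mathcal{P})$ on $\partial\mathcal{P}$. A cycle is a nonempty connected $\mathcal{C}$ with $\max_{\mathcal{C}}\mathbb{H}<\min_{\partial\mathcal{C}}\mathbb{H}$. Its depth is $\Gamma^{\mathcal{C}}:=\min_{\partial\mathcal{C}}\mathbb{H}-\min_{\mathcal{C}}\mathbb{H}$. General construction (C). Let $\mathscr{C}$ be a collection of pairwise disjoint cycles contained in $\overline{\Omega}$ with $|\mathscr{C}|\ge2$, and let $\Gamma^\star>0$. Put - $\mathscr{C}^\star:=\{\mathcal{C}\in\mathscr{C}:\Gamma^{\mathcal{C}}\ge\Gamma^\star\}$ and $\mathscr{C}^\sharp:=\{\mathcal{C}\in\mathscr{C}:\Gamma^{\mathcal{C}}<\Gamma^\star\}$; - $\mathscr{P}^{\mathscr{C}}:=\{\mathcal{F}(\mathcal{C}):\mathcal{C}\in\mathscr{C}\}$ and $\mathscr{P}^{\mathscr{C}^\star}:=\{\mathcal{F}(\mathcal{C}):\mathcal{C}\in\mathscr{C}^\star\}$; - $\Delta^{\mathscr{C}}:=\overline{\Omega}\setminus\bigcup_{\mathcal{C}\in\mathscr{C}}\mathcal{C}$. Let $\mathfrak{X}^{\mathscr{C}}$ be the continuous-time Markov chain on $\Omega^{\mathscr{C}}:=\Delta^{\mathscr{C}}\cup\mathscr{P}^{\mathscr{C}}$,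 in which each $\mathcal{F}(\mathcal{C})$ is treated as a single point. Its rates are: - $\mathfrak{R}^{\mathscr{C}}(\eta,\xi)=1$ for $\eta,\xi\in\Delta^{\mathscr{C}}$ with $\eta\sim\xi$ and $\mathbb{H}(\xi)\le\mathbb{H}(\eta)$; - $\mathfrak{R}^{\mathscr{C}}(\eta,\mathcal{F}(\mathcal{C}))=|\{\zeta\in\mathcal{C}:\eta\sim\zeta\}|$ for $\eta\in\Delta^{\mathscr{C}}\cap\partial\mathcal{C}$; - $\mathfrak{R}^{\mathscr{C}}(\mathcal{F}(\mathcal{C}),\eta)=|\mathcal{F}(\mathcal{C})|^{-1}|\{\zeta\in\mathcal{C}:\eta\sim\zeta\}|$ if $\Gamma^{\mathcal{C}}\le\Gamma^\star$ and $\eta\in\partial^\star\mathcal{C}$; - all other rates are $0$. The trace chain $\mathfrak{X}^{\mathscr{C}^\star}$ on $\mathscr{P}^{\mathscr{C}^\star}$ has rates, for distinct $\mathcal{C},\mathcal{C}'\in\mathscr{C}^\star$, $$\mathfrak{R}^{\mathscr{C}^\star}(\mathcal{F}(\mathcal{C}),\mathcal{F}(\mathcal{C}')):=\sum_{\eta\in\Delta^{\mathscr{C}}}\mathfrak{R}^{\mathscr{C}}(\mathcal{F}(\mathcal{C}),\eta)\,\mathbf{P}^{\mathscr{C}}_\eta[\mathcal{T}_{\mathcal{F}(\mathcal{C}')}=\mathcal{T}_{\mathscr{P}^{\mathscr{C}^\star}}].$$ Here $\mathbf{P}^{\mathscr{C}}_\eta$ is the law of $\mathfrak{X}^{\mathscr{C}}$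 started at $\eta$, and $\mathcal{T}_{\mathcal{A}}$ is the hitting time of $\mathcal{A}$. Hierarchy. Let $\mathscr{P}^1=\{\mathcal{P}_1^1,\dots,\mathcal{P}^1_{\nu_0}\}$ be the collection of all stable plateaux contained in $\overline{\Omega}$, and assume $\nu_0\ge2$. Suppose that at some level $\mathfrak{h}\ge1$ the sets $\mathcal{P}^{\mathfrak{h}}_1,\dots,\mathcal{P}^{\mathfrak{h}}_{\nu_{\mathfrak{h}-1}}$ are defined, with $\nu_{\mathfrak{h}-1}\ge2$. Then define: - $\mathbb{H}(\mathcal{P}^{\mathfrak{h}}_i):=\min_{\mathcal{P}^{\mathfrak{h}}_i}\mathbb{H}$; - $\mathscr{P}^{\star,\mathfrak{h}}:=\{\mathcal{P}^{\mathfrak{h}}_i:i\in[1,\nu_{\mathfrak{h}-1}]\}$; - $\breve{\mathcal{P}}^{\mathfrak{h}}_i:=\bigcup_{j\ne i}\mathcal{P}^{\mathfrak{h}}_j$; - $\Gamma^{\mathfrak{h}}_i:=\Phi(\mathcal{P}^{\mathfrak{h}}_i,\breve{\mathcal{P}}^{\mathfrak{h}}_i)-\mathbb{H}(\mathcal{P}^{\mathfrak{h}}_i)$ and $\Gamma^{\star,\mathfrak{h}}:=\min_i\Gamma_i^{\mathfrak{h}}$; - $\mathcal{V}^{\mathfrak{h}}_i:=\{\eta\in\Omega:\Phi(\mathcal{P}^{\mathfrak{h}}_i,\eta)-\mathbb{H}(\mathcal{P}^{\mathfrak{h}}_i)<\Gamma^{\mathfrak{h}}_i\}$. Set $\mathscr{C}^1:=\{\mathcal{V}^1_i:i\in[1,\nu_0]\}$.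 For $\mathfrak{h}\ge2$, set $$\mathscr{C}^{\mathfrak{h}}:=\{\mathcal{V}^{\mathfrak{h}}_i:i\in[1,\nu_{\mathfrak{h}-1}]\}\cup\{\mathcal{C}\in\mathscr{C}^{\star,\mathfrak{h}-1}_{\rm tr}\cup\mathscr{C}^{\sharp,\mathfrak{h}-1}:\mathcal{C}\cap\mathcal{V}^{\mathfrak{h}}_i=\emptyset\ \forall i\}.$$ Apply (C) to $(\mathscr{C}^{\mathfrak{h}},\Gamma^{\star,\mathfrak{h}})$. Write $\mathscr{C}^{\star,\mathfrak{h}}:=(\mathscr{C}^{\mathfrak{h}})^\star$ and $\mathscr{C}^{\sharp,\mathfrak{h}}:=(\mathscr{C}^{\mathfrak{h}})^\sharp$. Let $\mathfrak{X}^{\star,\mathfrak{h}}$ be the trace chain of (C) on $\mathscr{P}^{(\mathscr{C}^{\mathfrak{h}})^\star}$. Decompose $\mathscr{P}^{(\mathscr{C}^{\mathfrak{h}})^\star}$ into the closed communicating classes $\mathscr{P}^{\star,\mathfrak{h}}_1,\dots,\mathscr{P}^{\star,\mathfrak{h}}_{\nu_{\mathfrak{h}}}$ of $\mathfrak{X}^{\star,\mathfrak{h}}$ and the set $\mathscr{P}^{\star,\mathfrak{h}}_{\rm tr}$ of transient elements. Let $\mathscr{C}^{\star,\mathfrak{h}}_m:=\{\mathcal{C}\in\mathscr{C}^{\star,\mathfrak{h}}:\mathcal{F}(\mathcal{C})\in\mathscr{P}^{\star,\mathfrak{h}}_m\}$ for $m\in\{1,\dots,\nu_{\mathfrak{h}},{\rm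 tr}\}$. If $\nu_{\mathfrak{h}}\ge2$, define $\mathcal{P}^{\mathfrak{h}+1}_i:=\bigcup_{\mathcal{P}\in\mathscr{P}^{\star,\mathfrak{h}}_i}\mathcal{P}$ for $i\in[1,\nu_{\mathfrak{h}}]$ and continue to level $\mathfrak{h}+1$. The terminal level $\mathfrak{m}$ is the first $\mathfrak{h}$ with $\nu_{\mathfrak{h}}=1$. Finally, $\mathscr{P}^{\star,\mathfrak{h}}_{\rm rec}:=\mathscr{P}^{\star,\mathfrak{h}}_1\cup\dots\cup\mathscr{P}^{\star,\mathfrak{h}}_{\nu_{\mathfrak{h}}}$. Here $[a,b]$ denotes the set of integers from $a$ to $b$. *)

(* Defs.v *)
From HB Require Import structures.
From mathcomp Require Import all_boot all_order all_algebra.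
From mathcomp Require Import all_classical all_reals all_analysis.
Set Implicit Arguments. Unset Strict Implicit. Unset Printing Implicit Defensive.
Import Order.TTheory GRing.Theory Num.Theory.
Import numFieldNormedType.Exports.
Local Open Scope ring_scope.

Section Hierarchy.
Variables (R : realType) (T : finType) (adj : rel T) (H : T -> R).

Definition is_path (x : T) (s : seq T) (y : T) : bool :=
  path adj x s && (last x s == y).
Definition height (x : T) (s : seq T) : R := \big[Num.max/H x]_(z <- s) H z.
(* Phi(x,y) = min over paths x -> y of the height (written as inf; attained). *)
Definition Phi (x y : T) : R :=
  inf [set height x s | s in [set s | is_path x s y]].
Definition PhiS (A B : {set T}) : R :=
  inf [set Phi ab.1 ab.2 | ab in [set ab : T * T | (ab.1 \in A) /\ (ab.2 \in B)]].

Definition ground : {set T} := [set x | [forall y, H x <= H y]].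
Definition PhiBar : R :=
  sup [set Phi ab.1 ab.2 | ab in [set ab : T * T | (ab.1 \in ground) /\ (ab.2 \in ground)]].
Definition OmegaBar : {set T} := [set x | PhiS ground [set x] <= PhiBar].

Definition Fmin (A : {set T}) : {set T} := [set x in A | [forall y in A, H x <= H y]].
Definition bdry (A : {set T}) : {set T} := [set x | (x \notin A) && [exists y in A, adj x y]].
Definition bdry_star (A : {set T}) : {set T} := Fmin (bdry A).
Definition set_connected (A : {set T}) : bool :=
  [forall x in A, forall y in A, connect [rel a b | adj a b && (b \in A)] x y].
Definition minH (A : {set T}) : R := inf [set H x | x in [set x | x \in A]].

Definition stable_plateau (P : {set T}) : bool :=
  [&& P != finset.set0, set_connected P,
      [forall x in P, forall y in P, H x == H y] &
      [forall x in bdry P, forall y in P, H y < H x]].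
Definition is_cycle (C : {set T}) : bool :=
  [&& C != finset.set0, set_connected C &
      [forall x in C, forall y in bdry C, H x < H y]].
Definition depth (C : {set T}) : R := minH (bdry C) - minH C.

(* States of X^C: inl x for x in Delta^C, inr C standing for the point F(C). *)
Definition state := (T + {set T})%type.

Section Construction.
Variables (Cs : {set {set T}}) (Gs : R).

Definition Cstar : {set {set T}} := [set C in Cs | Gs <= depth C].
Definition Csharp : {set {set T}} := [set C in Cs | depth C < Gs].
Definition Delta : {set T} := OmegaBar :\: \bigcup_(C in Cs) C.

Definition nbC (C : {set T}) (x : T) : nat := #|[set z in C | adj x z]|.

Definition rateC (u v : state) : R :=
  match u, v with
  | inl x, inl y =>
      if [&& x \in Delta, y \in Delta, x != y, adj x y & H y <= H x] then 1 else 0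
  | inl x, inr C =>
      if [&& x \in Delta, C \in Cs & x \in bdry C] then (nbC C x)%:R else 0
  | inr C, inl y =>
      if [&& C \in Cs, depth C <= Gs, y \in Delta & y \in bdry_star C]
      then (nbC C y)%:R / (#|Fmin C|)%:R else 0
  | inr _, inr _ => 0
  end.

Definition total_rate (u : state) : R := \sum_(v : state) rateC u v.
Definition jump (u v : state) : R :=
  if 0 < total_rate u then rateC u v / total_rate u else 0.

(* hp n u = P_u[ the set B is hit within n jumps, and first at a point of A ] *)
Fixpoint hp (A B : pred state) (n : nat) (u : state) : R :=
  match n with
  | 0 => if A u then 1 else 0
  | n'.+1 => if A u then 1 else if B u then 0
             else \sum_(v : state) jump u v * hp A B n' v
  end.
(* P_u[T_A = T_B < oo] for A subset of B *)
Definition hitprob (A B : pred state) (u : state) : R := limn (fun n => hp A B n u).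

Definition Pstar : pred state :=
  fun u => if u is inr C then C \in Cstar else false.

(* rates of the trace chain on P^{Cstar}, indexed by the cycles of Cstar *)
Definition trace_rate (C C' : {set T}) : R :=
  \sum_(x in Delta) rateC (inr C) (inl x) *
     hitprob (fun u => u == inr C') Pstar (inl x).

Definition trace_edge : rel {set T} :=
  [rel C C' | [&& C \in Cstar, C' \in Cstar, C != C' & 0 < trace_rate C C']].
Definition communicate (C C' : {set T}) : bool :=
  connect trace_edge C C' && connect trace_edge C' C.
Definition comm_class (C : {set T}) : {set {set T}} :=
  [set C' in Cstar | communicate C C'].
Definition closed_class (K : {set {set T}}) : bool :=
  [forall C in K, forall C' in Cstar, trace_edge C C' ==> (C' \in K)].
Definition closed_classes : {set {set {set T}}} :=
  [set K | [exists C in Cstar, (K == comm_class C) && closed_class K]].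
Definition Cstar_tr : {set {set T}} :=
  [set C in Cstar | [forall K in closed_classes, C \notin K]].

End Construction.

(* A level input: plateaux P^h_i, and previous Cstar_tr union Csharp of level h-1 *)
Section Level.
Variables (Ps : {set {set T}}) (prev : {set {set T}}).

Definition Gam (P : {set T}) : R :=
  PhiS P (\bigcup_(Q in Ps | Q != P) Q) - minH P.
Definition Gstar : R := inf [set Gam P | P in [set P | P \in Ps]].
Definition Vset (P : {set T}) : {set T} := [set x | PhiS P [set x] - minH P < Gam P].
Definition level_cycles : {set {set T}} :=
  [set Vset P | P in Ps] :|:
  [set C in prev | [forall P in Ps, [disjoint C & Vset P]]].
Definition level_classes : {set {set {set T}}} := closed_classes level_cycles Gstar.
Definition next_level : {set {set T}} * {set {set T}} :=
  ([set \bigcup_(C in K) Fmin C | K : {set {set T}} in level_classes],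
   Cstar_tr level_cycles Gstar :|: Csharp level_cycles Gstar).
End Level.

Definition plateaux1 : {set {set T}} :=
  [set P | stable_plateau P && (P \subset OmegaBar)].

(* input of level h, for h >= 1 (input 0 is unused and equals input 1) *)
Definition level_input (h : nat) : {set {set T}} * {set {set T}} :=
  iter h.-1 (fun p => next_level p.1 p.2) (plateaux1, finset.set0).

Definition classes_at (h : nat) : {set {set {set T}}} :=
  level_classes (level_input h).1 (level_input h).2.

Definition nu (h : nat) : nat := if h is 0 then #|plateaux1| else #|classes_at h|.

End Hierarchy.

(* Main.v *)
Require Import Defs.
From HB Require Import structures.
From mathcomp Require Import all_boot all_order all_algebra.
From mathcomp Require Import all_classical all_reals all_analysis.
Import Order.TTheory GRing.Theory Num.Theory.
Import numFieldNormedType.Exports.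
From mathcomp Require Import lra.
Local Open Scope ring_scope.
Set Implicit Arguments. Unset Strict Implicit. Unset Printing Implicit Defensive.

Section Gen.
Variable R : realType.
Local Open Scope classical_set_scope.

Lemma fin_inf (I : finType) (g : I -> R) (E : set R) :
  E !=set0 -> E `<=` range g ->
  exists i, [/\ E (g i), inf E = g i & forall e, E e -> g i <= e].
Proof.
move=> [e0 Ee0] Eg; have [i0 _ gi0] := Eg _ Ee0.
have Pi0 : `[< E (g i0) >] by apply/asboolP; rewrite gi0.
case: (@arg_minP _ _ _ i0 (fun i => `[< E (g i) >]) g Pi0) => i /asboolP Ei imin.
have lb : forall e, E e -> g i <= e.
  by move=> e Ee; have [j _ gj] := Eg _ Ee; rewrite -gj; apply: imin; apply/asboolP; rewrite gj.
exists i; split => //; apply/eqP; rewrite eq_le; apply/andP; split.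
  by apply: ge_inf => //; exists (g i) => e Ee; exact: lb.
by apply: lb_le_inf; [exists e0 | move=> e Ee; exact: lb].
Qed.

Lemma fin_sup (I : finType) (g : I -> R) (E : set R) e :
  E `<=` range g -> E e -> e <= sup E.
Proof.
move=> Eg Ee.
have [i0 _] : exists i0 : I, True by have [i _ _] := Eg _ Ee; exists i.
case: (@arg_maxP _ _ _ i0 xpredT g erefl) => i _ imax.
have ub : has_ubound E by exists (g i) => x Ex; have [j _ <-] := Eg _ Ex; exact: imax.
by apply: ub_le_sup.
Qed.


Lemma inf_img_le (I : finType) (g : I -> R) (S : set I) i :
  S i -> inf [set g j | j in S] <= g i.
Proof.
move=> Si.
have E0 : ([set g j | j in S] !=set0)%classic by exists (g i), i.
have Er : ([set g j | j in S] `<=` range g)%classic by move=> r [j' _ <-]; exists j'.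
have [k [[j Sj gj] infE lb]] := fin_inf E0 Er.
by rewrite infE; apply: lb; exists i.
Qed.

Lemma inf_img_att (I : finType) (g : I -> R) (S : set I) i0 :
  S i0 -> exists i, S i /\ inf [set g j | j in S] = g i.
Proof.
move=> Si0.
have E0 : ([set g j | j in S] !=set0)%classic by exists (g i0), i0.
have Er : ([set g j | j in S] `<=` range g)%classic by move=> r [j' _ <-]; exists j'.
have [k [[j Sj gj] infE lb]] := fin_inf E0 Er.
by exists j; rewrite infE gj.
Qed.
End Gen.

Section Main.
Variables (R : realType) (T : finType) (adj : rel T) (H : T -> R).
Hypothesis adj_sym : symmetric adj.
Hypothesis adj_conn : forall x y : T, connect adj x y.

Local Notation Phi := (Phi adj H).
Local Notation PhiS := (PhiS adj H).
Local Notation height := (height H).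
Local Notation is_path := (is_path adj).
Local Notation minH := (minH H).
Local Notation Fmin := (Fmin H).

Lemma lemaxl (a b : R) : a <= Num.max a b. Proof. by rewrite le_max lexx. Qed.
Lemma lemaxr (a b : R) : b <= Num.max a b. Proof. by rewrite le_max lexx orbT. Qed.

Definition okp (t : R) x y := exists s, is_path x s y /\ all (fun z => H z <= t) (x :: s).

Lemma height_le t x s : (height x s <= t) = all (fun z => H z <= t) (x :: s).
Proof.
rewrite /Defs.height; elim: s => [|a s IH]; first by rewrite big_nil /= andbT.
by rewrite big_cons ge_max IH /= andbCA.
Qed.

Lemma height_range x s : exists z, height x s = H z.
Proof.
rewrite /Defs.height; elim: s => [|a s [z IH]]; first by rewrite big_nil; exists x.
rewrite big_cons IH; case: (leP (H a) (H z)) => _; [by exists z | by exists a].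
Qed.

Lemma Phi_le t x y : Phi x y <= t <-> okp t x y.
Proof.
set E := [set height x s | s in [set s | is_path x s y]]%classic.
have E0 : (E !=set0)%classic.
  have /connectP [p pp lp] := adj_conn x y.
  by exists (height x p); exists p => //; rewrite /mkset /Defs.is_path pp -lp eqxx.
have Er : (E `<=` range H)%classic.
  by move=> r [s _ <-]; have [z ->] := height_range x s; exists z.
have [i [Ei infE lb]] := fin_inf E0 Er.
rewrite /Defs.Phi -/E infE; split.
  move=> Hi; case: Ei => s ps hs; exists s; split => //.
  by rewrite -height_le hs.
move=> [s [ps alls]]; apply: le_trans (lb _ _) _.
  by exists s.
by rewrite height_le.
Qed.

Lemma okp_Phi x y : okp (Phi x y) x y.
Proof. by apply/Phi_le. Qed.

Lemma okp_mono t t' x y : t <= t' -> okp t x y -> okp t' x y.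
Proof.
move=> tt' [s [ps a]]; exists s; split => //.
by apply/allP => z /(allP a) /le_trans; apply.
Qed.

Lemma okp_ends t x y : okp t x y -> H x <= t /\ H y <= t.
Proof.
move=> [s [/andP[_ /eqP <-] a]]; split; first by move/allP: a; apply; rewrite inE eqxx.
by move/allP: a; apply; exact: mem_last.
Qed.

Lemma Phi_ge x y : H x <= Phi x y /\ H y <= Phi x y.
Proof. exact: okp_ends (okp_Phi x y). Qed.

Lemma okp_sym t x y : okp t x y -> okp t y x.
Proof.
move=> [s [/andP[ps /eqP ly] a]].
have E : rev (x :: s) = y :: rev (belast x s) by rewrite lastI rev_rcons ly.
exists (rev (belast x s)); split; last by rewrite -E all_rev.
apply/andP; split.
  rewrite -ly rev_path; apply: (sub_path _ ps) => u v /=; by rewrite adj_sym.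
by rewrite -[last y _](last_cons y y) -E rev_cons last_rcons.
Qed.

Lemma Phi_sym x y : Phi x y = Phi y x.
Proof.
by apply/eqP; rewrite eq_le; apply/andP; split; apply/Phi_le/okp_sym/okp_Phi.
Qed.

Lemma okp_cat t x y z : okp t x y -> okp t y z -> okp t x z.
Proof.
move=> [s [/andP[ps /eqP ly] a]] [s' [/andP[ps' /eqP lz] a']].
exists (s ++ s'); split.
  by rewrite /Defs.is_path cat_path ps last_cat ly ps' lz eqxx.
by rewrite -cat_cons all_cat a; move: a' => /= /andP[].
Qed.

Lemma Phi_ultra x y z : Phi x z <= Num.max (Phi x y) (Phi y z).
Proof.
apply/Phi_le; apply: okp_cat (okp_mono _ (okp_Phi x y)) (okp_mono _ (okp_Phi y z)).
  exact: lemaxl. exact: lemaxr.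
Qed.

Lemma okp_refl x : okp (H x) x x.
Proof. by exists [::]; rewrite /Defs.is_path /= eqxx lexx. Qed.

Lemma Phi_refl x : Phi x x <= H x.
Proof. exact/Phi_le/okp_refl. Qed.

Lemma okp_step x y : adj x y -> okp (Num.max (H x) (H y)) x y.
Proof.
move=> axy; exists [:: y]; rewrite /Defs.is_path /= axy eqxx lemaxl lemaxr.
by [].
Qed.

Lemma Phi_step x y : adj x y -> Phi x y <= Num.max (H x) (H y).
Proof. by move=> /okp_step /Phi_le. Qed.

Lemma okp_exit t x y (A : {set T}) : okp t x y -> x \in A -> y \notin A ->
  exists2 b, b \in bdry adj A & H b <= t.
Proof.
move=> [s [/andP[ps /eqP ly] a]]; elim: s x ps ly a => [|c s IH] x /=.
  by move=> _ -> _ ->.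
move=> /andP[axc ps] ly /andP[hx a] xA yA.
case cA: (c \in A); first exact: IH ps ly a cA yA.
exists c; last by case/andP: a.
rewrite /bdry inE cA /=; apply/existsP; exists x; rewrite xA /=.
by rewrite adj_sym.
Qed.


Lemma PhiS_le (A B : {set T}) a b : a \in A -> b \in B -> PhiS A B <= Phi a b.
Proof.
move=> aA bB; exact: (@inf_img_le _ (T * T)%type (fun ab => Phi ab.1 ab.2)
  [set ab | (ab.1 \in A) /\ (ab.2 \in B)]%classic (a, b) (conj aA bB)).
Qed.

Lemma PhiS_att (A B : {set T}) a b : a \in A -> b \in B ->
  exists a' b', [/\ a' \in A, b' \in B & PhiS A B = Phi a' b'].
Proof.
move=> aA bB; have [[a' b'] [[/= ? ?] e]] := @inf_img_att _ (T * T)%type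
  (fun ab => Phi ab.1 ab.2) [set ab | (ab.1 \in A) /\ (ab.2 \in B)]%classic (a, b) (conj aA bB).
by exists a', b'.
Qed.

Lemma minH_le (A : {set T}) x : x \in A -> minH A <= H x.
Proof.
move=> xA; exact: (@inf_img_le _ T H [set x | x \in A]%classic x xA).
Qed.

Lemma minH_att (A : {set T}) x : x \in A -> exists2 y, y \in A & minH A = H y.
Proof.
move=> xA; have [y [yA e]] := @inf_img_att _ T H [set x | x \in A]%classic x xA.
by exists y.
Qed.

Lemma FminP (A : {set T}) x : x \in Fmin A -> x \in A /\ H x = minH A.
Proof.
rewrite /Defs.Fmin inE => /andP[xA /forall_inP m]; split => //.
have [y yA e] := minH_att xA; apply/eqP; rewrite eq_le e m //=.
by rewrite -e minH_le.
Qed.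

Lemma Fmin_in (A : {set T}) x : x \in A -> H x = minH A -> x \in Fmin A.
Proof.
move=> xA e; rewrite /Defs.Fmin inE xA /=; apply/forall_inP => y yA.
by rewrite e minH_le.
Qed.

Lemma Fmin_n0 (A : {set T}) x : x \in A -> exists y, y \in Fmin A.
Proof. by move=> xA; have [y yA e] := minH_att xA; exists y; apply: Fmin_in. Qed.


Lemma sum_ge_term (I : finType) (F : I -> R) j : (forall i, 0 <= F i) ->
  F j <= \sum_i F i.
Proof. by move=> F0; rewrite (bigD1 j) //= lerDl sumr_ge0. Qed.

Lemma psum_ex (I : finType) (P : pred I) (F : I -> R) :
  0 < \sum_(i | P i) F i -> exists i, P i /\ 0 < F i.
Proof.
move=> s0; apply: contrapT => nex.
have h : \sum_(i | P i) F i <= \sum_(i | P i) (0 : R).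
  apply: ler_sum => i Pi; rewrite leNgt; apply/negP => Fi; apply: nex; by exists i.
by rewrite big1_eq in h; move: (lt_le_trans s0 h); rewrite ltxx.
Qed.

Lemma mul_pos_both (a b : R) : 0 <= a -> 0 <= b -> 0 < a * b -> 0 < a /\ 0 < b.
Proof.
move=> a0 b0 ab; move: a0 b0; rewrite !le_eqVlt => /orP[/eqP ea|ap] /orP[/eqP eb|bp] //.
- by move: ab; rewrite -ea mul0r ltxx.
- by move: ab; rewrite -ea mul0r ltxx.
- by move: ab; rewrite -eb mulr0 ltxx.
Qed.

Section Chain.
Variables (Cs : {set {set T}}) (Gs : R).
Local Notation rate := (rateC adj H Cs Gs).
Local Notation total := (total_rate adj H Cs Gs).
Local Notation jump := (jump adj H Cs Gs).
Local Notation hp := (hp adj H Cs Gs).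
Local Notation hitprob := (hitprob adj H Cs Gs).

Lemma rate_ge0 u v : 0 <= rate u v.
Proof.
case: u => [x|C]; case: v => [y|D] /=; do ?case: ifP => _;
  by rewrite ?ler01 ?ler0n ?lexx ?divr_ge0 ?ler0n.
Qed.

Lemma rate_le_total u v : rate u v <= total u.
Proof. by apply: sum_ge_term => w; exact: rate_ge0. Qed.

Lemma jump_ge0 u v : 0 <= jump u v.
Proof.
rewrite /Defs.jump; case: ifP => tp; last exact: lexx.
by rewrite divr_ge0 ?rate_ge0 ?ltW.
Qed.

Lemma jump_pos u v : 0 < rate u v -> 0 < jump u v.
Proof.
move=> r; have tp := lt_le_trans r (rate_le_total u v).
by rewrite /Defs.jump tp divr_gt0.
Qed.

Lemma jump_pos' u v : 0 < jump u v -> 0 < rate u v.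
Proof.
rewrite /Defs.jump; case: ifP => tp; last by rewrite ltxx.
have := rate_ge0 u v; rewrite le_eqVlt => /orP[/eqP <-|//].
by rewrite mul0r ltxx.
Qed.

Lemma sum_jump_le1 u : \sum_v jump u v <= 1.
Proof.
have [tp|tp] := boolP (0 < total u).
  under eq_bigr => v _ do rewrite /Defs.jump tp.
  by rewrite -big_distrl /= -/(total_rate _ _ _ _ _) mulfV ?gt_eqF.
under eq_bigr => v _ do rewrite /Defs.jump (negbTE tp).
by rewrite big1 ?ler01.
Qed.

Lemma hp_ge0 A B n u : 0 <= hp A B n u.
Proof.
elim: n u => [|n IH] u /=; first by case: (A u); rewrite ?ler01 ?lexx.
case: (A u); first exact: ler01; case: (B u); first exact: lexx.
by apply: sumr_ge0 => v _; rewrite mulr_ge0 ?jump_ge0.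
Qed.

Lemma hp_le1 A B n u : hp A B n u <= 1.
Proof.
elim: n u => [|n IH] u /=; first by case: (A u); rewrite ?ler01 ?lexx.
case: (A u); first exact: lexx; case: (B u); first exact: ler01.
apply: le_trans (sum_jump_le1 u); apply: ler_sum => v _.
by rewrite ler_piMr ?jump_ge0.
Qed.

Lemma hp_mono A B n u : hp A B n u <= hp A B n.+1 u.
Proof.
elim: n u => [|n IH] u.
  rewrite /=; case: (A u); first exact: lexx.
  case: (B u); first by rewrite lexx.
  apply: sumr_ge0 => v _; apply: mulr_ge0; first exact: jump_ge0.
  by case: (A v); rewrite ?ler01 ?lexx.
rewrite [hp A B n.+1 u]/= [hp A B n.+2 u]/=; case: (A u); first exact: lexx.
case: (B u); first exact: lexx.
by apply: ler_sum => v _; rewrite ler_wpM2l ?jump_ge0.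
Qed.

Lemma hit_ge A B n u : hp A B n u <= hitprob A B u.
Proof.
have nd : nondecreasing_seq (fun n => hp A B n u) by apply/nondecreasing_seqP => k; exact: hp_mono.
apply: (nondecreasing_cvgn_le nd); apply: nondecreasing_is_cvgn => //.
by exists 1 => r [k _ <-]; exact: hp_le1.
Qed.

Lemma hit_ge0 A B u : 0 <= hitprob A B u.
Proof. exact: le_trans (hp_ge0 A B 0 u) (hit_ge A B 0 u). Qed.

Lemma hit_pos A B u : 0 < hitprob A B u -> exists n, 0 < hp A B n u.
Proof.
move=> hpos; apply: contrapT => nex; move: hpos.
have E : (fun n => hp A B n u) = (fun _ => 0).
  apply: funext => n; apply/eqP; rewrite eq_le hp_ge0 andbT leNgt; apply/negP => h.
  by apply: nex; exists n.
rewrite /Defs.hitprob E.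
have -> : limn (fun _ : nat => (0 : R)) = 0 by apply: lim_cst.
by rewrite ltxx.
Qed.

Definition er (A B : pred (state T)) : rel (state T) :=
  fun u v => ~~ A u && ~~ B u && (0 < rate u v).

Lemma hp_connect A B n u : 0 < hp A B n u -> exists2 v, connect (er A B) u v & A v.
Proof.
elim: n u => [|n IH] u /=.
  by case Au: (A u); [exists u | rewrite ltxx].
case Au: (A u); first by exists u.
case Bu: (B u); first by rewrite ltxx.
move=> /psum_ex [w [_ pw]].
have [jw hw] := mul_pos_both (jump_ge0 u w) (hp_ge0 A B n w) pw.
have [v wv Av] := IH w hw; exists v => //.
apply: connect_trans wv; apply: connect1; by rewrite /er Au Bu /= jump_pos'.
Qed.

Lemma connect_hp A B u v : connect (er A B) u v -> A v -> exists n, 0 < hp A B n u.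
Proof.
move=> /connectP [p pp ->] Alast; clear v; elim: p u pp Alast => [|w p IH] u /=.
  by move=> _ Au; exists 0%N; rewrite /= Au ltr01.
move=> /andP[/andP[/andP[Au Bu] ruw] pp] Al.
have [n hn] := IH w pp Al; exists n.+1; rewrite /= (negbTE Au) (negbTE Bu).
have h : jump u w * hp A B n w <= \sum_v jump u v * hp A B n v.
  by apply: (@sum_ge_term _ (fun v => jump u v * hp A B n v)) => v; rewrite mulr_ge0 ?jump_ge0 ?hp_ge0.
by apply: lt_le_trans h; rewrite mulr_gt0 ?jump_pos.
Qed.


Local Notation Delta := (Delta adj H Cs).
Local Notation depth := (depth adj H).

Definition lv (u : state T) : R :=
  match u with inl x => H x | inr C => minH (bdry adj C) end.

Lemma step_lv u v : 0 < rate u v -> lv v <= lv u.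
Proof.
case: u => [x|C]; case: v => [y|D] /=.
- by case: ifP => [/and5P[_ _ _ _ ->] // | _]; rewrite ltxx.
- by case: ifP => [/and3P[_ _ xb] _ | _]; [exact: minH_le | rewrite ltxx].
- by case: ifP => [/and4P[_ _ _ /FminP[_ ->]] _ | _]; [exact: lexx | rewrite ltxx].
- by rewrite ltxx.
Qed.

Lemma connect_lv A B u v : connect (er A B) u v -> lv v <= lv u.
Proof.
move=> /connectP [p pp ->]; elim: p u pp => [|w p IH] u /=; first by rewrite lexx.
move=> /andP[/andP[_ ruw] pp]; exact: le_trans (IH w pp) (step_lv ruw).
Qed.

Lemma bdry_n0 (D : {set T}) x : x \in bdry adj D -> exists z, z \in D.
Proof. by rewrite inE => /andP[_ /exists_inP [z zD _]]; exists z. Qed.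

Lemma step_rev u v : 0 < rate u v -> lv v = lv u ->
  (forall D, v = inr D -> depth D <= Gs) -> 0 < rate v u.
Proof.
case: u => [x|C]; case: v => [y|D] /=.
- case: ifP => [/and5P[xD yD xy axy _] _ e _ | _]; last by rewrite ltxx.
  by rewrite yD xD eq_sym xy adj_sym axy e lexx ltr01.
- case: ifP => [/and3P[xD DC xb] np e dD | _]; last by rewrite ltxx.
  have xs : x \in bdry_star adj H D by apply: Fmin_in => //; rewrite e.
  rewrite DC dD // xD xs /= divr_gt0 //.
  have [z zD] := bdry_n0 xb; have [w wF] := Fmin_n0 zD.
  by rewrite ltr0n card_gt0; apply/set0Pn; exists w.
- case: ifP => [/and4P[DC dD yD /FminP[yb _]] np e _ | _]; last by rewrite ltxx.
  rewrite yD DC yb /=; move: np; apply: contraTT; rewrite -!leNgt => n0.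
  have -> : (nbC adj C y)%:R = 0 :> R by apply/eqP; rewrite eq_le n0 ler0n.
  by rewrite mul0r lexx.
- by rewrite ltxx.
Qed.

Local Notation Cst := (Cstar adj H Cs Gs).
Local Notation Pst := (Pstar adj H Cs Gs).
Local Notation tedge := (trace_edge adj H Cs Gs).

Lemma rate_to_inr z D : 0 < rate z (inr D) ->
  D \in Cs /\ exists y, [/\ z = inl y, y \in bdry adj D & y \in Delta].
Proof.
case: z => [y|C] /=; last by rewrite ltxx.
case: ifP => [/and3P[yD DC yb] _ | _]; last by rewrite ltxx.
by split => //; exists y.
Qed.

Lemma last_edge A B u v : connect (er A B) u v -> u != v -> exists w, 0 < rate w v.
Proof.
move=> /connectP [p pp ->]; case/lastP: p pp => [|p z] /=; first by rewrite eqxx.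
rewrite rcons_path last_rcons => /andP[_ /andP[_ r]] _; by exists (last u p).
Qed.

Lemma edge_path C C' : tedge C C' -> exists x, [/\ 0 < rate (inr C) (inl x), x \in Delta &
  connect (er (fun u => u == inr C') Pst) (inl x) (inr C')].
Proof.
move=> /and4P[CC C'C _ tr]; have [x [xD px]] := psum_ex tr.
have [rp hp'] := mul_pos_both (rate_ge0 _ _) (hit_ge0 _ _ _) px.
have [n hn] := hit_pos hp'; have [v cv /eqP ev] := hp_connect hn.
by exists x; split => //; move: cv; rewrite ev.
Qed.

Lemma Cst_Cs C : C \in Cst -> C \in Cs.
Proof. by rewrite inE => /andP[]. Qed.

Lemma Cst_depth C : C \in Cst -> Gs <= depth C.
Proof. by rewrite inE => /andP[]. Qed.

Definition good L (z : state T) := ~~ Pst z && (lv z == L).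
Definition gr L : rel (state T) := fun z w => [&& good L z, good L w & 0 < rate z w].

Lemma gr_sym L : symmetric (gr L).
Proof.
have imp : forall z w, gr L z w -> gr L w z.
  move=> z w /and3P[gz gw rzw]; rewrite /gr gz gw /=.
  apply: (step_rev rzw).
    by move: gz gw => /andP[_ /eqP ->] /andP[_ /eqP ->].
  move=> D eD; subst w; move: gw; rewrite /good /= => /andP[nD _].
  have [DC _] := rate_to_inr rzw.
  by move: nD; rewrite inE DC /= -ltNge => /ltW.
by move=> z w; apply/idP/idP; apply: imp.
Qed.

Lemma p1 C' L : lv (inr C') = L ->
  forall p u, path (er (fun u => u == inr C') Pst) u p -> last u p = inr C' ->
  u != inr C' -> lv u <= L ->
  exists w, [/\ connect (gr L) u w, good L w & 0 < rate w (inr C')].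
Proof.
move=> lC' p; elim: p => [|w p IH] u /=; first by move=> _ ->; rewrite eqxx.
move=> /andP[/andP[/andP[nu npu] ruw] pw] lw nuC lu.
have cu : lv (inr C') <= lv u.
  apply: (@connect_lv (fun u => u == inr C') Pst); apply/connectP; exists (w :: p) => //=.
  by rewrite pw andbT; apply/andP; split; first apply/andP.
have gu : good L u by rewrite /good npu /= eq_le lu -lC' cu.
case: (eqVneq w (inr C')) => [ew | nw].
  by exists u; split => //; rewrite -ew.
have lw' : lv w <= L := le_trans (step_lv ruw) lu.
have [w' [cw gw' rw']] := IH w pw lw nw lw'.
have gw : good L w.
  move: pw lw nw; case: p {IH} => [|w2 p2] /=; first by move=> _ ->; rewrite eqxx.
  move=> /andP[/andP[/andP[nw2 npw] r2] pw2] lw2 _.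
  have cw2 : lv (inr C') <= lv w.
    apply: (@connect_lv (fun u => u == inr C') Pst); apply/connectP; exists (w2 :: p2) => //=.
    by rewrite pw2 andbT; apply/andP; split; first apply/andP.
  by rewrite /good npw /= eq_le lw' -lC' cw2.
exists w'; split => //; apply: connect_trans cw; apply: connect1.
by rewrite /gr gu gw ruw.
Qed.

Lemma sum_ge_termP (I : finType) (P : pred I) (F : I -> R) j : P j ->
  (forall i, P i -> 0 <= F i) -> F j <= \sum_(i | P i) F i.
Proof.
move=> Pj F0; rewrite (bigD1 j) //= lerDl; apply: sumr_ge0 => i /andP[Pi _]; exact: F0.
Qed.

Lemma edge_facts C C' : tedge C C' ->
  [/\ exists z, z \in C', minH C' <= minH C & (minH C' = minH C -> tedge C' C)].
Proof.
move=> te; have [x [rx xD cx]] := edge_path te.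
move: (te) => /and4P[CC C'C CC' tr].
move: (rx) => /=; case: ifP => [/and4P[_ dC _ xs] _ | _]; last by rewrite ltxx.
have [_ ex] := FminP xs.
have lvx : lv (inl x) = minH (bdry adj C) by [].
have le1 := connect_lv cx; rewrite /= ex in le1.
have dC' := Cst_depth C'C.
have [w rw] := last_edge cx isT.
have [_ [y [_ yb _]]] := rate_to_inr rw.
split; first exact: bdry_n0 yb.
  by move: dC dC' le1; rewrite /Defs.depth => ? ? ?; lra.
move=> eqm.
have eab : minH (bdry adj C') = minH (bdry adj C) by move: dC dC' le1 eqm; rewrite /Defs.depth => ? ? ? ?; lra.
have dC'e : depth C' <= Gs by move: dC dC' le1 eqm; rewrite /Defs.depth => ? ? ? ?; lra.
set L := minH (bdry adj C).
have [p pp lp] := connectP cx.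
have lxL : lv (inl x) <= L by rewrite /= ex.
have [w0 [cw gw rw0]] := p1 eab pp (esym lp) isT lxL.
have [_ [y0 [ey yb0 yD]]] := rate_to_inr rw0.
have ry : 0 < rate (inr C') (inl y0).
  rewrite -ey; apply: (step_rev rw0); last by move=> D [<-].
  by move: gw => /andP[_ /eqP ->].
have cyx : connect (gr L) (inl y0) (inl x) by rewrite (sym_connect_sym (@gr_sym L)) -ey.
have cyC : connect (er (fun u => u == inr C) Pst) (inl y0) (inr C).
  apply: connect_trans (_ : connect _ (inl x) _); last first.
    apply: connect1; rewrite /er /=.
    by apply: (step_rev rx) => //; rewrite /= ex.
  apply: connect_sub cyx => z z' /and3P[gz gz' rz]; apply: connect1.
  rewrite /er rz andbT; move: gz => /andP[nz _]; rewrite nz andbT.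
  by apply: contraNN nz => /eqP -> /=.
have [n hn] := connect_hp cyC (eqxx _).
have hpos := lt_le_trans hn (hit_ge _ _ _ _).
rewrite /trace_edge /= C'C CC eq_sym CC' /=.
apply: lt_le_trans (sum_ge_termP (P := mem (Delta)) (F := fun x => rate (inr C') (inl x) *
  hitprob (fun u => u == inr C) Pst (inl x)) yD _).
  by rewrite mulr_gt0.
by move=> i _; rewrite mulr_ge0 ?rate_ge0 ?hit_ge0.
Qed.

Local Notation comm := (communicate adj H Cs Gs).
Local Notation ccl := (comm_class adj H Cs Gs).
Local Notation closedc := (closed_class adj H Cs Gs).
Local Notation classes := (closed_classes adj H Cs Gs).

Lemma connect_minH C D : connect tedge C D -> minH D <= minH C.
Proof.
move=> /connectP [p pp ->]; elim: p C pp => [|E p IH] C /=; first by move=> _; exact: lexx.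
move=> /andP[e pp]; have [_ le _] := edge_facts e; exact: le_trans (IH E pp) le.
Qed.

Lemma comm_trans C D E : comm C D -> comm D E -> comm C E.
Proof.
move=> /andP[c1 c2] /andP[c3 c4]; apply/andP; split; [exact: connect_trans c1 c3 | exact: connect_trans c4 c2].
Qed.

Lemma comm_sym C D : comm C D -> comm D C.
Proof. by move=> /andP[c1 c2]; apply/andP. Qed.

Lemma in_ccl C E : (E \in ccl C) = (E \in Cst) && comm C E.
Proof. by rewrite /Defs.comm_class finset.in_set. Qed.

Lemma comm_class_eq C D : comm C D -> ccl C = ccl D.
Proof.
move=> cCD; apply/setP => E; rewrite !in_ccl; case: (E \in Cst) => //=.
apply/idP/idP => h; [exact: comm_trans (comm_sym cCD) h | exact: comm_trans cCD h].
Qed.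

Lemma class_mem K C : K \in classes -> C \in K -> C \in Cst /\ K = ccl C.
Proof.
rewrite inE => /exists_inP [C0 C0C /andP[/eqP -> _]].
rewrite in_ccl => /andP[CC cm]; split => //; exact: comm_class_eq.
Qed.

Lemma class_closed K : K \in classes -> closedc K.
Proof. by rewrite inE => /exists_inP [C0 C0C /andP[_ ->]]. Qed.

Lemma class_n0 K : K \in classes -> exists C, C \in K.
Proof.
rewrite inE => /exists_inP [C0 C0C /andP[/eqP -> _]]; exists C0.
by rewrite in_ccl C0C /=; apply/andP; split; exact: connect0.
Qed.

Lemma class_uniq K K' C : K \in classes -> K' \in classes -> C \in K -> C \in K' -> K = K'.
Proof. by move=> KC K'C CK CK'; rewrite (class_mem KC CK).2 (class_mem K'C CK').2. Qed.

Lemma class_conn K C D : K \in classes -> C \in K -> D \in K -> connect tedge C D.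
Proof.
move=> KC CK DK; have [_ eK] := class_mem KC CK; move: DK; rewrite eK in_ccl.
by move=> /andP[_ /andP[]].
Qed.

Lemma class_minH K C D : K \in classes -> C \in K -> D \in K -> minH C = minH D.
Proof.
move=> KC CK DK; apply/eqP; rewrite eq_le.
by rewrite (connect_minH (class_conn KC DK CK)) (connect_minH (class_conn KC CK DK)).
Qed.

Lemma class_sub K C : K \in classes -> C \in K -> C \in Cst.
Proof. by move=> KC CK; have [] := class_mem KC CK. Qed.

Lemma ground_class g C : g \in ground H -> C \in Cst -> g \in C ->
  ccl C \in classes /\ (forall D, D \in ccl C -> minH D = H g).
Proof.
move=> /[dup] gG; rewrite inE => /forallP gmin CC gC.
have lbH : forall (D : {set T}) (z : T), z \in D -> H g <= minH D.
  by move=> D z zD; have [y yD ->] := minH_att zD.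
have mC : minH C = H g by apply/eqP; rewrite eq_le minH_le // (lbH C g gC).
have key : forall p D0, path tedge D0 p -> minH D0 = H g ->
    minH (last D0 p) = H g /\ connect tedge (last D0 p) D0.
  elim=> [|E p IH] D0 /=; first by move=> _ ->; split => //; exact: connect0.
  move=> /andP[e pp] mD0; have [[z zE] le rv] := edge_facts e.
  have mE : minH E = minH D0 by apply/eqP; rewrite eq_le le mD0 (lbH E z zE).
  have [m1 c1] := IH E pp (etrans mE mD0); split => //.
  by apply: connect_trans c1 (connect1 (rv mE)).
have keyc : forall D, connect tedge C D -> minH D = H g /\ connect tedge D C.
  by move=> D /connectP [p pp ->]; apply: key.
split; last first.
  by move=> D; rewrite in_ccl => /andP[_ /andP[cCD _]]; have [] := keyc D cCD.
rewrite inE; apply/exists_inP; exists C => //; rewrite eqxx /=.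
apply/forall_inP => D; rewrite in_ccl => /andP[DC /andP[cCD cDC]].
apply/forall_inP => D' D'C; apply/implyP => e.
have cCD' : connect tedge C D' := connect_trans cCD (connect1 e).
by rewrite in_ccl D'C /=; apply/andP; split => //; have [] := keyc D' cCD'.
Qed.

End Chain.


Lemma groundP x : reflect (forall y, H x <= H y) (x \in ground H).
Proof. by rewrite /ground finset.in_set; apply: forallP. Qed.

Lemma two_diff (I : finType) (A : {set I}) K : (1 < #|A|)%N -> K \in A -> exists2 K', K' \in A & K' != K.
Proof.
move=> two KA; move: two; rewrite (cardsD1 K) KA add1n ltnS card_gt0 => /set0Pn [K' ].
by rewrite in_setD1 => /andP[ne K'A]; exists K'.
Qed.

Section Level.
Variables (Ps prev : {set {set T}}).
Implicit Types (P Q C D : {set T}) (x y p q g : T).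
Local Notation Cs := (level_cycles adj H Ps prev).
Local Notation Gs := (Gstar adj H Ps).
Local Notation V := (Vset adj H Ps).
Local Notation Gam := (Gam adj H Ps).
Local Notation Cst := (Cstar adj H Cs Gs).
Local Notation classes := (closed_classes adj H Cs Gs).
Local Notation Others P := (\bigcup_(Q in Ps | Q != P) Q).

Hypothesis hA : forall P, P \in Ps -> exists x, x \in P.
Hypothesis hB : forall P Q x, P \in Ps -> Q \in Ps -> P != Q -> x \in P -> x \in Q -> False.
Hypothesis hC : forall C, C \in prev -> exists x, x \in C.
Hypothesis hD : forall C C' x, C \in prev -> C' \in prev -> C != C' -> x \in C -> x \in C' -> False.
Hypothesis hE : forall P, P \in Ps -> 0 < Gam P.
Hypothesis hF : forall g, g \in ground H -> exists2 P, P \in Ps & g \in P.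
Hypothesis hG : forall P, P \in Ps -> exists2 Q, Q \in Ps & Q != P.

Lemma Gs_le P : P \in Ps -> Gs <= Gam P.
Proof. move=> PP; exact: (@inf_img_le _ {set T} Gam [set P | P \in Ps]%classic P PP). Qed.

Lemma Gs_att P : P \in Ps -> exists2 Q, Q \in Ps & Gs = Gam Q.
Proof.
move=> PP; have [Q [QP e]] := @inf_img_att _ {set T} Gam [set P | P \in Ps]%classic P PP.
by exists Q.
Qed.

Lemma others_mem P Q q : Q \in Ps -> Q != P -> q \in Q -> q \in Others P.
Proof. by move=> QP QnP qQ; apply/bigcupP; exists Q => //; rewrite QP QnP. Qed.

Lemma others_inv P q : q \in Others P -> exists Q, [/\ Q \in Ps, Q != P & q \in Q].
Proof. by move=> /bigcupP [Q /andP[QP QnP] qQ]; exists Q. Qed.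

Lemma VP P x : (x \in V P) = (PhiS P [set x] - minH P < Gam P).
Proof. by rewrite /Vset finset.in_set. Qed.

Lemma V_in P x : P \in Ps -> x \in P -> H x <= minH P -> x \in V P.
Proof.
move=> PP xP hx; rewrite VP.
have h1 := PhiS_le xP (set11 x); have h2 := Phi_refl x; have h3 := hE PP.
lra.
Qed.

Lemma PhiS1 P x : P \in Ps -> exists2 p, p \in P & PhiS P [set x] = Phi p x.
Proof.
move=> PP; have [y yP] := hA PP; have [p [x' [pP]]] := PhiS_att yP (set11 x).
by rewrite inE => /eqP -> e; exists p.
Qed.

Lemma Gam_le P p q : p \in P -> q \in Others P -> Gam P <= Phi p q - minH P.
Proof. by move=> pP qO; rewrite /Defs.Gam lerD2r PhiS_le. Qed.

Lemma V_disj P Q x : P \in Ps -> Q \in Ps -> P != Q -> x \in V P -> x \in V Q -> False.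
Proof.
move=> PP QP PQ; rewrite !VP.
have [p pP ep] := PhiS1 x PP; have [q qQ eq] := PhiS1 x QP.
rewrite ep eq => hp hq.
have QnP : Q != P by rewrite eq_sym.
have g1 := Gam_le pP (others_mem QP QnP qQ).
have g2 := Gam_le qQ (others_mem PP PQ pP).
have u := Phi_ultra p x q; rewrite le_max in u.
rewrite (Phi_sym q p) in g2; rewrite (Phi_sym q x) in hq.
case/orP: u => u; lra.
Qed.

Lemma cyc_cases C : C \in Cs ->
  (exists2 P, P \in Ps & C = V P) \/ (C \in prev /\ forall P, P \in Ps -> [disjoint C & V P]).
Proof.
rewrite /level_cycles finset.in_setU => /orP[/imsetP [P PP ->]|]; first by left; exists P.
by rewrite finset.in_set => /andP[Cp /forall_inP h]; right.
Qed.

Lemma Vn0 P : P \in Ps -> exists x, x \in V P.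
Proof.
move=> PP; have [y yP] := hA PP; have [z /FminP [zP ez]] := Fmin_n0 yP.
by exists z; apply: V_in => //; rewrite ez.
Qed.

Lemma cyc_n0 C : C \in Cs -> exists x, x \in C.
Proof. by case/cyc_cases => [[P PP ->]|[Cp _]]; [exact: Vn0 | exact: hC]. Qed.

Lemma cyc_disj C C' x : C \in Cs -> C' \in Cs -> C != C' -> x \in C -> x \in C' -> False.
Proof.
case/cyc_cases => [[P PP ->]|[Cp dC]]; case/cyc_cases => [[Q QP ->]|[C'p dC']].
- move=> ne; apply: (V_disj PP QP); apply: contraNneq ne => ->; by [].
- by move=> _ xV xC'; move: (disjointFl (dC' P PP) xV); rewrite xC'.
- by move=> _ xC xV; move: (disjointFl (dC Q QP) xV); rewrite xC.
- exact: hD.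
Qed.

Lemma exists_ground (x : T) : exists g, g \in ground H.
Proof.
case: (@arg_minP _ _ _ x xpredT H erefl) => g _ gmin.
by exists g; apply/groundP => y; exact: gmin.
Qed.

Lemma Gs_pos (x : T) : 0 < Gs.
Proof.
have [g gG] := exists_ground x; have [P PP _] := hF gG.
have [Q QP ->] := Gs_att PP; exact: hE.
Qed.

Lemma ground_in_cyc g : g \in ground H -> exists2 C, C \in Cst & g \in C.
Proof.
move=> gG; have [P PP gP] := hF gG; have gmin := groundP _ gG.
have mP : minH P = H g.
  apply/eqP; rewrite eq_le minH_le //=; have [y yP ->] := minH_att gP; exact: gmin.
set W := V P.
have gW : g \in W by apply: V_in => //; rewrite mP.
have [Q QP QnP] := hG PP; have [q qQ] := hA QP.
have qO : q \in Others P := others_mem QP QnP qQ.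
have qW : q \notin W.
  rewrite VP -leNgt; have [p pP ->] := PhiS1 q PP; exact: Gam_le pP qO.
have [b bB _] := okp_exit (okp_Phi g q) gW qW.
have [b0 b0B eb0] := minH_att bB.
have hb0 : minH P + Gam P <= H b0.
  move: (b0B); rewrite inE => /andP[b0W /exists_inP [z zW ab]].
  move: zW; rewrite VP; have [p pP ->] := PhiS1 z PP => zW.
  rewrite leNgt; apply/negP => hlt.
  have azb : adj z b0 by rewrite adj_sym.
  have u1 := Phi_ultra p z b0; have u2 := Phi_step azb.
  have u3 := (Phi_ge p z).2.
  rewrite le_max in u1; rewrite le_max in u2.
  have hlt2 : Phi p b0 < minH P + Gam P.
    by case/orP: u1 => u1; case/orP: u2 => u2; lra.
  have : b0 \in W by rewrite VP; have := PhiS_le pP (set11 b0); lra.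
  by rewrite (negbTE b0W).
have minW : minH W <= H g := minH_le gW.
exists W => //; rewrite /Cstar finset.in_set; apply/andP; split.
  by rewrite /level_cycles finset.in_setU; apply/orP; left; apply: imset_f.
have := Gs_le PP; rewrite /Defs.depth; lra.
Qed.

Local Notation U K := (\bigcup_(C in K) Fmin C).

Lemma Fmin_ground g C : g \in ground H -> g \in C -> g \in Fmin C.
Proof.
move=> gG gC; rewrite /Defs.Fmin finset.in_set gC /=; apply/forall_inP => y _.
exact: (groundP _ gG).
Qed.

Lemma U_n0 K : K \in classes -> exists x, x \in U K.
Proof.
move=> KC; have [C CK] := class_n0 KC.
have [y yC] := cyc_n0 (Cst_Cs (class_sub KC CK)).
have [z zF] := Fmin_n0 yC; by exists z; apply/bigcupP; exists C.
Qed.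

Lemma U_disj K K' x : K \in classes -> K' \in classes -> x \in U K -> x \in U K' -> K = K'.
Proof.
move=> KC K'C /bigcupP [C CK xC] /bigcupP [C' C'K xC'].
have [eC|nC] := eqVneq C C'; first by subst C'; exact: class_uniq KC K'C CK C'K.
exfalso; apply: (cyc_disj (Cst_Cs (class_sub KC CK)) (Cst_Cs (class_sub K'C C'K)) nC).
  exact: (FminP xC).1.
exact: (FminP xC').1.
Qed.

Lemma U_minH K C : K \in classes -> C \in K -> minH (U K) = minH C.
Proof.
move=> KC CK; have [x xU] := U_n0 KC; have [y yU ->] := minH_att xU.
move: yU => /bigcupP [C' C'K /FminP [_ ->]]; exact: class_minH KC C'K CK.
Qed.

Local Notation Ps' := (next_level adj H Ps prev).1.
Local Notation prev' := (next_level adj H Ps prev).2.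

Lemma in_Ps' P' : P' \in Ps' -> exists2 K, K \in classes & P' = U K.
Proof. by move=> /imsetP [K KC ->]; exists K. Qed.

Lemma U_in_Ps' K : K \in classes -> U K \in Ps'.
Proof. by move=> KC; apply: imset_f. Qed.

Lemma nxA P' : P' \in Ps' -> exists x, x \in P'.
Proof. by move=> /in_Ps' [K KC ->]; exact: U_n0. Qed.

Lemma nxB P' Q' x : P' \in Ps' -> Q' \in Ps' -> P' != Q' -> x \in P' -> x \in Q' -> False.
Proof.
move=> /in_Ps' [K KC ->] /in_Ps' [K' K'C ->] ne xK xK'.
by move: ne; rewrite (U_disj KC K'C xK xK') eqxx.
Qed.

Lemma nx_prev C : C \in prev' -> C \in Cs.
Proof.
rewrite /next_level /= finset.in_setU => /orP[|].
  by rewrite /Cstar_tr finset.in_set => /andP[/Cst_Cs].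
by rewrite /Csharp finset.in_set => /andP[].
Qed.

Lemma nxC C : C \in prev' -> exists x, x \in C.
Proof. by move=> /nx_prev; exact: cyc_n0. Qed.

Lemma nxD C C' x : C \in prev' -> C' \in prev' -> C != C' -> x \in C -> x \in C' -> False.
Proof. by move=> /nx_prev CC /nx_prev C'C; exact: cyc_disj. Qed.

Lemma nxF g : g \in ground H -> exists2 P', P' \in Ps' & g \in P'.
Proof.
move=> gG; have [C CC gC] := ground_in_cyc gG; have [cl _] := ground_class gG CC gC.
exists (U (comm_class adj H Cs Gs C)); first exact: U_in_Ps'.
apply/bigcupP; exists C; last exact: Fmin_ground.
by rewrite in_ccl CC /=; apply/andP; split; exact: connect0.
Qed.


Lemma nxG (two : (1 < #|classes|)%N) P' : P' \in Ps' -> exists2 Q', Q' \in Ps' & Q' != P'.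
Proof.
move=> /in_Ps' [K KC ->]; have [K' K'C ne] := two_diff two KC.
exists (U K'); first exact: U_in_Ps'.
apply/negP => /eqP e; move/negP: ne; apply; apply/eqP.
have [x xU] := U_n0 K'C.
have xU2 : x \in U K by rewrite -e.
exact: (U_disj K'C KC xU xU2).
Qed.

Lemma nxE (two : (1 < #|classes|)%N) P' : P' \in Ps' -> 0 < Defs.Gam adj H Ps' P'.
Proof.
move=> P'P; move: (P'P) => /in_Ps' [K KC eP].
have [Q' Q'P ne] := nxG two P'P; have [q0 q0Q] := nxA Q'P.
have [p0 p0P] := nxA P'P.
have q0O : q0 \in \bigcup_(Q in Ps' | Q != P') Q by apply/bigcupP; exists Q' => //; rewrite Q'P ne.
have [p [q [pP qO e]]] := PhiS_att p0P q0O.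
rewrite /Defs.Gam e.
move: qO => /bigcupP [Q2 /andP[Q2P Q2ne] qQ2].
move: (Q2P) => /in_Ps' [K' K'C eQ2].
move: pP qQ2; rewrite eP eQ2 => /bigcupP [C CK pC] /bigcupP [C' C'K qC'].
have nC : C != C'.
  apply/negP => /eqP eC; subst C'; move: Q2ne; rewrite eQ2 eP.
  by rewrite (class_uniq K'C KC C'K CK) eqxx.
have CC := class_sub KC CK; have C'C := class_sub K'C C'K.
have qnC : q \notin C.
  apply/negP => qC; exact: cyc_disj (Cst_Cs CC) (Cst_Cs C'C) nC qC (FminP qC').1.
have [b bB hb] := okp_exit (okp_Phi p q) (FminP pC).1 qnC.
have mb := minH_le bB.
have dC := Cst_depth CC.
have [y _] := FminP pC.
have gp := Gs_pos p.
rewrite (U_minH KC CK); move: dC; rewrite /Defs.depth => dC; lra.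
Qed.

Lemma terminal (one : #|classes| = 1%N) K : K \in classes -> U K = ground H.
Proof.
move=> KC; have [C0 C0K] := class_n0 KC; have [x0 _] := cyc_n0 (Cst_Cs (class_sub KC C0K)).
have [g0 g0G] := exists_ground x0.
have [Cg CgC gCg] := ground_in_cyc g0G.
have [clg mg] := ground_class g0G CgC gCg.
have [K1 eK1] : exists K1, classes = [set K1] by apply/cards1P; rewrite one.
have allK : forall K', K' \in classes -> K' = K.
  by move=> K'; rewrite eK1 => /set1P ->; move: KC; rewrite eK1 => /set1P ->.
apply/setP => x; apply/idP/idP.
  move=> /bigcupP [C CK /FminP [_ ex]]; apply/groundP => y.
  rewrite ex -(allK _ clg) in CK *; rewrite (mg _ CK); exact: (groundP _ g0G).
move=> xG; have [Cx CxC xCx] := ground_in_cyc xG; have [clx _] := ground_class xG CxC xCx.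
apply/bigcupP; exists Cx; last exact: Fmin_ground.
rewrite -(allK _ clx) in_ccl CxC /=; apply/andP; split; exact: connect0.
Qed.

End Level.


Record InvR (Ps prev : {set {set T}}) : Prop := {
  iA : forall P, P \in Ps -> exists x, x \in P;
  iB : forall P Q x, P \in Ps -> Q \in Ps -> P != Q -> x \in P -> x \in Q -> False;
  iC : forall C, C \in prev -> exists x, x \in C;
  iD : forall C C' x, C \in prev -> C' \in prev -> C != C' -> x \in C -> x \in C' -> False;
  iE : forall P, P \in Ps -> 0 < Gam adj H Ps P;
  iF : forall g, g \in ground H -> exists2 P, P \in Ps & g \in P;
  iG : forall P, P \in Ps -> exists2 Q, Q \in Ps & Q != P }.

Lemma inv_next Ps prev : InvR Ps prev ->
  (1 < #|closed_classes adj H (level_cycles adj H Ps prev) (Gstar adj H Ps)|)%N ->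
  InvR (next_level adj H Ps prev).1 (next_level adj H Ps prev).2.
Proof.
move=> [hA hB hC hD hE hF hG] two; split.
- by apply: nxA; assumption.
- by apply: nxB; assumption.
- by apply: nxC; assumption.
- by apply: nxD; assumption.
- by apply: nxE; assumption.
- by apply: nxF; assumption.
- by apply: nxG; assumption.
Qed.

Lemma path_exit (A B : {set T}) x p : path [rel a b | adj a b && (b \in A)] x p ->
  x \in B -> last x p \notin B -> exists2 b, b \in bdry adj B & b \in A.
Proof.
elim: p x => [|c p IH] x /=; first by move=> _ ->.
move=> /andP[/andP[axc cA] pp] xB lB.
case cB: (c \in B); first exact: IH pp cB lB.
exists c => //; rewrite /bdry finset.in_set cB /=; apply/exists_inP; exists x => //.
by rewrite adj_sym.
Qed.

Lemma stable_sub P Q x : stable_plateau adj H P -> stable_plateau adj H Q ->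
  x \in P -> x \in Q -> P \subset Q.
Proof.
move=> /and4P[_ Pc Pk _] /and4P[_ _ _ Qb] xP xQ; apply/fintype.subsetP => y yP.
apply/negPn/negP => yQ.
move/forall_inP: Pc => /(_ x xP) /forall_inP /(_ y yP) /connectP [p pp ey].
have lB : last x p \notin Q by rewrite -ey.
have [b bQ bP] := path_exit pp xQ lB.
move/forall_inP: Qb => /(_ b bQ) /forall_inP /(_ x xQ).
move/forall_inP: Pk => /(_ b bP) /forall_inP /(_ x xP) /eqP ->.
by rewrite ltxx.
Qed.

Lemma in_pl1 P : (P \in plateaux1 adj H) = stable_plateau adj H P && (P \subset OmegaBar adj H).
Proof. by rewrite /plateaux1 finset.in_set. Qed.

Definition e2 : rel T := fun a b => [&& adj a b, a \in ground H & b \in ground H].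

Lemma e2_sym : symmetric e2.
Proof.
move=> a b; rewrite /e2 adj_sym.
by case: (a \in ground H); case: (b \in ground H); rewrite ?andbT ?andbF.
Qed.

Lemma e2_all p a : a \in ground H -> path e2 a p -> all (fun z => z \in ground H) (a :: p).
Proof.
elim: p a => [|c p IH] a /=; first by move=> ->.
by move=> aG /andP[/and3P[_ _ cG] pp]; rewrite aG /=; have := IH c cG pp.
Qed.

Lemma ground_eq x y : x \in ground H -> y \in ground H -> H x = H y.
Proof. by move=> /groundP hx /groundP hy; apply/eqP; rewrite eq_le hx hy. Qed.

Lemma base_inv (two : (1 < #|plateaux1 adj H|)%N) : InvR (plateaux1 adj H) finset.set0.
Proof.
have hA : forall P, P \in plateaux1 adj H -> exists x, x \in P.
  by move=> P; rewrite in_pl1 => /andP[/and4P[/set0Pn [x xP] _ _ _] _]; exists x.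
have hB : forall P Q x, P \in plateaux1 adj H -> Q \in plateaux1 adj H -> P != Q ->
    x \in P -> x \in Q -> False.
  move=> P Q x; rewrite !in_pl1 => /andP[sP _] /andP[sQ _] ne xP xQ.
  by move: ne; rewrite finset.eqEsubset (stable_sub sP sQ xP xQ) (stable_sub sQ sP xQ xP).
have hG : forall P, P \in plateaux1 adj H -> exists2 Q, Q \in plateaux1 adj H & Q != P.
  by move=> P PP; exact: two_diff two PP.
split => //.
- by move=> C; rewrite finset.in_set0.
- by move=> C C' x; rewrite finset.in_set0.
- move=> P PP; have [Q QP QnP] := hG P PP; have [q0 q0Q] := hA Q QP.
  have [p0 p0P] := hA P PP.
  have q0O : q0 \in \bigcup_(Q in plateaux1 adj H | Q != P) Q.
    by apply/bigcupP; exists Q => //; rewrite QP QnP.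
  have [p [q [pP qO e]]] := PhiS_att p0P q0O.
  move: qO => /bigcupP [Q2 /andP[Q2P Q2n] qQ2].
  have qnP : q \notin P by apply/negP => qP; exact: hB Q2 P q Q2P PP Q2n qQ2 qP.
  have [b bB hb] := okp_exit (okp_Phi p q) pP qnP.
  move: (PP); rewrite in_pl1 => /andP[/and4P[_ _ _ Pb] _].
  move/forall_inP: Pb => /(_ b bB) /forall_inP /(_ p pP) hpb.
  have mp := minH_le pP.
  by rewrite /Defs.Gam e; lra.
- move=> g gG.
  set Cp := [set y | connect e2 g y].
  have CpG : forall y, y \in Cp -> y \in ground H.
    move=> y; rewrite finset.in_set => /connectP [p pp ->].
    by have /allP := e2_all gG pp; apply; exact: mem_last.
  have gCp : g \in Cp by rewrite finset.in_set connect0.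
  exists Cp => //; rewrite in_pl1; apply/andP; split.
    apply/and4P; split.
    + by apply/set0Pn; exists g.
    + apply/forall_inP => x xC; apply/forall_inP => y yC.
      have cxy : connect e2 x y.
        move: xC yC; rewrite !finset.in_set => cgx cgy.
        by apply: connect_trans cgy; rewrite (sym_connect_sym e2_sym).
      move: cxy xC => /connectP [p pp ->]; elim: p x pp => [|c p IH] x /=.
        by move=> _ _; exact: connect0.
      move=> /andP[exc pp] xC.
      have cC : c \in Cp.
        by move: xC; rewrite !finset.in_set => gx; apply: connect_trans gx (connect1 exc).
      apply: connect_trans (IH c pp cC); apply: connect1; rewrite /= cC andbT.
      by case/and3P: exc.
    + apply/forall_inP => x xC; apply/forall_inP => y yC.
      by rewrite (ground_eq (CpG x xC) (CpG y yC)).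
    + apply/forall_inP => x xB; apply/forall_inP => y yC.
      move: xB; rewrite /bdry finset.in_set => /andP[xnC /exists_inP [z zC axz]].
      have xnG : x \notin ground H.
        apply/negP => xG; move/negP: xnC; apply.
        have zG := CpG z zC.
        move: zC; rewrite !finset.in_set => gz; apply: connect_trans gz (connect1 _).
        by rewrite /e2 adj_sym axz xG zG.
      rewrite lt_neqAle (groundP _ (CpG y yC)) andbT.
      apply: contraNneq xnG => e; apply/groundP => w; rewrite -e.
      exact: (groundP _ (CpG y yC)).
  apply/fintype.subsetP => x xC; rewrite /OmegaBar finset.in_set.
  have oxg : okp (H g) g x.
    move: (xC); rewrite finset.in_set => /connectP [p pp ex].
    exists p; split.
      rewrite /Defs.is_path -ex eqxx andbT.
      by apply: (sub_path _ pp) => a b /and3P[].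
    apply/allP => z /(allP (e2_all gG pp)) zG; by rewrite (ground_eq zG gG).
  have h1 := PhiS_le gG (set11 x).
  have h2 : Phi g x <= H g by apply/Phi_le.
  have h3 : Phi g g <= PhiBar adj H.
    apply: (@fin_sup _ (T * T)%type (fun ab => Phi ab.1 ab.2)); last by exists (g, g).
    by move=> r [ab _ <-]; exists ab.
  have h4 := (Phi_ge g g).1.
  lra.
Qed.

Lemma inv_terminal Ps prev : InvR Ps prev ->
  #|closed_classes adj H (level_cycles adj H Ps prev) (Gstar adj H Ps)| = 1%N ->
  forall K, K \in closed_classes adj H (level_cycles adj H Ps prev) (Gstar adj H Ps) ->
  \bigcup_(C in K) Fmin C = ground H.
Proof.
move=> [hA hB hC hD hE hF hG] one K KC.
by apply: terminal KC; assumption.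
Qed.

End Main.

Unset Implicit Arguments.

Theorem mainTheorem8 (R : realType) (T : finType) (adj : rel T) (H : T -> R)
  (adj_sym : symmetric adj) (adj_irr : irreflexive adj)
  (adj_conn : forall x y : T, connect adj x y)
  (nu0_ge2 : (2 <= nu adj H 0)%N)
  (m : nat) (m_ge1 : (1 <= m)%N)
  (nu_before : forall h : nat, (1 <= h)%N -> (h < m)%N -> (2 <= nu adj H h)%N)
  (nu_m : nu adj H m = 1%N) :
  forall K : {set {set T}}, K \in classes_at adj H m ->
    \bigcup_(C in K) Fmin H C = ground H.
Proof.
have inv : forall h, (1 <= h)%N -> (h <= m)%N ->
    InvR adj H (level_input adj H h).1 (level_input adj H h).2.
  elim=> [//|[|h] IH] _ hm.
    exact: (base_inv adj_sym adj_conn nu0_ge2).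
  exact: (inv_next adj_sym adj_conn (IH isT (ltnW hm)) (nu_before h.+1 isT hm)).
move=> K KC.
have [m' em] : exists m', m = m'.+1 by case: (m) m_ge1 => // m'' _; exists m''.
apply: (inv_terminal adj_sym adj_conn (inv m m_ge1 (leqnn m))) KC.
by move: nu_m; rewrite em.
Qed.
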